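(* Let $G$ be a group with finite generating set $S$, let $\Gamma$ be a tileset graph for $(G,S)$ and let $Y$ be a non-empty skeletal subset. Then $X=Y\cap X_\Gamma$ is non-empty if and only if there is a bi-infinite $\Gamma$-snake $(\omega,\zeta)$ with $d\omega\in Y$. In addition, if $Y$ is an effective (resp. sofic) subshift, then $X$ is an effective (resp. sofic) subshift.
   Context: Elements of $G$ are represented by words over the alphabet $S\cup S^{-1}$; $\overline{w}$ denotes the element represented by $w$. A tileset graph for $(G,S)$ is a finite multigraph $\Gamma=(A,B)$ whose edges are triples $(a,a',s)$ with $a,a'\in A$, $s\in S\cup S^{-1}$ (from $a$ to $a'$, labeled $s$), such that $(a,a',s)\in B$ implies $(a',a,s^{-1})\in B$. A bi-infinite $\Gamma$-snake is a pair $(\omega,\zeta)$ with $\omega:\mathbb{Z}\to G$ injective and $\zeta:\mathbb{Z}\to A$ such that for all $i$, $d\omega_i:=\omega(i)^{-1}\omega(i+1)\in S\cup S^{-1}$ and $(\zeta(i),\zeta(i+1),d\omega_i)\in B$; $d\omega$ denotes the sequence $(d\omega_i)_{i\in\mathbb{Z}}\in (S\cup S^{-1})^{\mathbb{Z}}$. For a finite alphabet $\mathcal{A}$, a subshift is a set $X_{\mathcal F}\subseteq\mathcal{A}^{\mathbb{Z}}$ of all sequences in which no word of a set $\mathcal{F}$ of forbidden finite words appears; it is sofic if $\mathcal F$ can be taken regular and effective if $\mathcal F$ can be taken decidable. The skeleton subshift $X_{G,S}\subseteq (S\cup S^{-1})^{\mathbb{Z}}$ is the set of sequences none of whose non-empty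 finite factors represents $1_G$. A skeletal subset is a shift-invariant subset $Y\subseteq X_{G,S}$ (shift $\sigma(x)_i=x_{i+1}$). $X_\Gamma\subseteq(S\cup S^{-1})^{\mathbb{Z}}$ is the set of label sequences of bi-infinite paths in $\Gamma$. *)

(* Defs.v *)
From Stdlib Require Import ZArith List Arith.
Import ListNotations.
Open Scope Z_scope.

Record group_axioms (G : Type) (mul : G -> G -> G) (one : G) (inv : G -> G) : Prop := {
  mul_assoc : forall x y z, mul x (mul y z) = mul (mul x y) z;
  mul_one_l : forall x, mul one x = x;
  mul_one_r : forall x, mul x one = x;
  mul_inv_l : forall x, mul (inv x) x = one;
  mul_inv_r : forall x, mul x (inv x) = one }.

Definition Finite (T : Type) : Prop := exists l : list T, forall x, In x l.

Inductive recf : Type :=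
| RZero : recf
| RSucc : recf
| RProj : nat -> recf
| RComp : recf -> list recf -> recf
| RPrec : recf -> recf -> recf
| RMu : recf -> recf.

Inductive reval : recf -> list nat -> nat -> Prop :=
| ev_zero : forall v, reval RZero v 0
| ev_succ : forall x v, reval RSucc (x :: v) (S x)
| ev_proj : forall i v y, nth_error v i = Some y -> reval (RProj i) v y
| ev_comp : forall f gs v ys y,
    Forall2 (fun g y' => reval g v y') gs ys -> reval f ys y -> reval (RComp f gs) v y
| ev_prec0 : forall f g v y, reval f v y -> reval (RPrec f g) (0%nat :: v) y
| ev_precS : forall f g n v z y,
    reval (RPrec f g) (n :: v) z -> reval g (n :: z :: v) y ->
    reval (RPrec f g) (S n :: v) y
| ev_mu : forall f v n,
    reval f (n :: v) 0%nat ->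
    (forall m, (m < n)%nat -> exists k, reval f (m :: v) (S k)) ->
    reval (RMu f) v n.

Definition decidable_nat (P : nat -> Prop) : Prop :=
  exists f : recf,
    (forall n, exists b, reval f [n] b /\ (b <= 1)%nat) /\
    (forall n, P n <-> reval f [n] 1%nat).

Definition cpair (x y : nat) : nat := ((x + y) * (x + y + 1)) / 2 + y.
Fixpoint code_list (l : list nat) : nat :=
  match l with [] => 0%nat | x :: t => S (cpair x (code_list t)) end.

Section Subshifts.
Context {A : Type}.

Definition factor (x : Z -> A) (i : Z) (n : nat) : list A :=
  map (fun k => x (i + Z.of_nat k)) (seq 0 n).

Definition appears (w : list A) (x : Z -> A) : Prop :=
  exists i, factor x i (length w) = w.

Definition XF (F : list A -> Prop) (x : Z -> A) : Prop :=
  forall w, F w -> ~ appears w x.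

Definition is_subshift (Y : (Z -> A) -> Prop) : Prop :=
  exists F : list A -> Prop, forall x, Y x <-> XF F x.

Definition regular (F : list A -> Prop) : Prop :=
  exists (Q : Type) (q0 : Q) (delta : Q -> A -> Q) (acc : Q -> Prop),
    Finite Q /\ forall w, F w <-> acc (fold_left delta w q0).

(** decidable languages: w.r.t. some enumeration [L] of the finite alphabet,
    the set of codes of forbidden words is decidable *)
Definition decidable_lang (F : list A -> Prop) : Prop :=
  exists L : list A, NoDup L /\ (forall a, In a L) /\
    decidable_nat (fun c => exists w ns,
       Forall2 (fun a n => nth_error L n = Some a) w ns /\
       c = code_list ns /\ F w).

Definition sofic_subshift (Y : (Z -> A) -> Prop) : Prop :=
  exists F, regular F /\ forall x, Y x <-> XF F x.

Definition effective_subshift (Y : (Z -> A) -> Prop) : Prop :=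
  exists F, decidable_lang F /\ forall x, Y x <-> XF F x.

Definition shift (x : Z -> A) : Z -> A := fun i => x (i + 1).

End Subshifts.

Definition inSS {G : Type} (inv : G -> G) (S : list G) (g : G) : Prop :=
  exists s, In s S /\ (g = s \/ g = inv s).

Definition Ltr {G : Type} (inv : G -> G) (S : list G) : Type := {g : G | inSS inv S g}.

Section GroupNotions.
Context {G : Type} (mul : G -> G -> G) (one : G) (inv : G -> G) (S : list G).
Local Notation Ltr := (Ltr inv S).


Definition word_eval (w : list Ltr) : G :=
  fold_right (fun a acc => mul (proj1_sig a) acc) one w.

Definition generates : Prop := forall g : G, exists w : list Ltr, word_eval w = g.

Definition skeleton (x : Z -> Ltr) : Prop :=
  forall i n, (0 < n)%nat -> word_eval (factor x i n) <> one.

Definition skeletal (Y : (Z -> Ltr) -> Prop) : Prop :=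
  (forall x, Y x -> skeleton x) /\ (forall x, Y x <-> Y (shift x)).

Definition tileset_graph {V : Type} (B : V -> V -> Ltr -> Prop) : Prop :=
  Finite V /\
  forall a a' s, B a a' s ->
    exists t : Ltr, proj1_sig t = inv (proj1_sig s) /\ B a' a t.

Definition XGamma {V : Type} (B : V -> V -> Ltr -> Prop) (x : Z -> Ltr) : Prop :=
  exists zeta : Z -> V, forall i, B (zeta i) (zeta (i + 1)) (x i).

(** bi-infinite Γ-snake (ω, ζ); [d] is the sequence dω *)
Definition snake {V : Type} (B : V -> V -> Ltr -> Prop)
    (omega : Z -> G) (zeta : Z -> V) (d : Z -> Ltr) : Prop :=
  (forall i j, omega i = omega j -> i = j) /\
  forall i, proj1_sig (d i) = mul (inv (omega i)) (omega (i + 1)) /\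
            B (zeta i) (zeta (i + 1)) (d i).

End GroupNotions.

(* Main.v *)
Require Import Defs.
From Stdlib Require Import ZArith List Lia Arith Classical ClassicalEpsilon FunctionalExtensionality PropExtensionality.
Import ListNotations.
Open Scope nat_scope.

Definition recf_ind' (P : recf -> Prop)
  (H0 : P RZero) (H1 : P RSucc) (H2 : forall i, P (RProj i))
  (H3 : forall f gs, P f -> Forall P gs -> P (RComp f gs))
  (H4 : forall f g, P f -> P g -> P (RPrec f g))
  (H5 : forall f, P f -> P (RMu f)) : forall f, P f :=
  fix F f := match f with
  | RZero => H0 | RSucc => H1 | RProj i => H2 i
  | RComp f gs => H3 f gs (F f)
      ((fix G l : Forall P l := match l with nil => Forall_nil _
         | g :: t => Forall_cons _ (F g) (G t) end) gs)
  | RPrec f g => H4 f g (F f) (F g)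
  | RMu f => H5 f (F f) end.

Lemma reval_det : forall f v y y', reval f v y -> reval f v y' -> y = y'.
Proof.
  induction f using recf_ind'; intros v y y' Ha Hb.
  - inversion Ha; inversion Hb; subst; auto.
  - inversion Ha; inversion Hb; subst; congruence.
  - inversion Ha; inversion Hb; subst; congruence.
  - inversion Ha as [| | |? ? ? ys ? Hys Hf| | |]; subst.
    inversion Hb as [| | |? ? ? ys0 ? Hys0 Hf0| | |]; subst.
    assert (ys = ys0).
    { clear Hf Hf0 Ha Hb. revert ys ys0 Hys Hys0. induction H; intros ys ys0 Ha Hb.
      - inversion Ha; inversion Hb; subst; auto.
      - inversion Ha; subst; inversion Hb; subst. f_equal; eauto. }
    subst; eauto.
  - revert y y' Ha Hb. destruct v as [|n v]; intros y y' Ha Hb; [inversion Ha|].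
    revert y y' Ha Hb; induction n; intros y y' Ha Hb.
    + inversion Ha; subst; inversion Hb; subst; eauto.
    + inversion Ha; subst; inversion Hb; subst.
      assert (z = z0) by eauto. subst; eauto.
  - inversion Ha as [| | | | | |? ? ? Z1 L1]; subst.
    inversion Hb as [| | | | | |? ? ? Z2 L2]; subst.
    destruct (lt_eq_lt_dec y y') as [[Hl|Hl]|Hl]; auto.
    + destruct (L2 _ Hl) as [k Hk]. specialize (IHf _ _ _ Z1 Hk). discriminate.
    + destruct (L1 _ Hl) as [k Hk]. specialize (IHf _ _ _ Z2 Hk). discriminate.
Qed.

Definition R0 (c : nat) := exists F, forall v, reval F v c.
Definition R1 (g : nat -> nat) := exists F, forall x, reval F [x] (g x).
Definition R2 (g : nat -> nat -> nat) := exists F, forall x y, reval F [x;y] (g x y).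
Definition R3 (g : nat -> nat -> nat -> nat) := exists F, forall x y z, reval F [x;y;z] (g x y z).

Lemma R1_ext g g' : R1 g -> (forall x, g x = g' x) -> R1 g'.
Proof. intros [F H] E; exists F; intros; rewrite <- E; auto. Qed.
Lemma R2_ext g g' : R2 g -> (forall x y, g x y = g' x y) -> R2 g'.
Proof. intros [F H] E; exists F; intros; rewrite <- E; auto. Qed.
Lemma R3_ext g g' : R3 g -> (forall x y z, g x y z = g' x y z) -> R3 g'.
Proof. intros [F H] E; exists F; intros; rewrite <- E; auto. Qed.

Fixpoint constF (c : nat) : recf := match c with 0 => RZero | S c => RComp RSucc [constF c] end.
Lemma constF_ok c v : reval (constF c) v c.
Proof. induction c; simpl. constructor. econstructor. constructor. apply IHc. constructor. constructor. Qed.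

Lemma comp1 f g v y1 y : reval g v y1 -> reval f [y1] y -> reval (RComp f [g]) v y.
Proof. intros; econstructor; eauto. Qed.
Lemma comp2 f g1 g2 v y1 y2 y : reval g1 v y1 -> reval g2 v y2 -> reval f [y1;y2] y ->
  reval (RComp f [g1;g2]) v y.
Proof. intros; econstructor; eauto. Qed.
Lemma comp3 f g1 g2 g3 v y1 y2 y3 y : reval g1 v y1 -> reval g2 v y2 -> reval g3 v y3 ->
  reval f [y1;y2;y3] y -> reval (RComp f [g1;g2;g3]) v y.
Proof. intros; econstructor; eauto. Qed.

Lemma R1_const c : R1 (fun _ => c). Proof. exists (constF c); intros; apply constF_ok. Qed.
Lemma R2_const c : R2 (fun _ _ => c). Proof. exists (constF c); intros; apply constF_ok. Qed.
Lemma R3_const c : R3 (fun _ _ _ => c). Proof. exists (constF c); intros; apply constF_ok. Qed.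
Lemma R1_id : R1 (fun x => x). Proof. exists (RProj 0); intros; constructor; reflexivity. Qed.
Lemma R2_p0 : R2 (fun x y => x). Proof. exists (RProj 0); intros; constructor; reflexivity. Qed.
Lemma R2_p1 : R2 (fun x y => y). Proof. exists (RProj 1); intros; constructor; reflexivity. Qed.
Lemma R3_p0 : R3 (fun x y z => x). Proof. exists (RProj 0); intros; constructor; reflexivity. Qed.
Lemma R3_p1 : R3 (fun x y z => y). Proof. exists (RProj 1); intros; constructor; reflexivity. Qed.
Lemma R3_p2 : R3 (fun x y z => z). Proof. exists (RProj 2); intros; constructor; reflexivity. Qed.
Lemma R1_succ : R1 S. Proof. exists RSucc; intros; constructor. Qed.

Lemma R1_comp1 h g : R1 h -> R1 g -> R1 (fun x => h (g x)).
Proof. intros [Fh Hh] [Fg Hg]; exists (RComp Fh [Fg]); intros; eapply comp1; eauto. Qed.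
Lemma R1_comp2 h g1 g2 : R2 h -> R1 g1 -> R1 g2 -> R1 (fun x => h (g1 x) (g2 x)).
Proof. intros [Fh Hh] [F1 H1] [F2 H2]; exists (RComp Fh [F1;F2]); intros; eapply comp2; eauto. Qed.
Lemma R2_comp1 h g : R1 h -> R2 g -> R2 (fun x y => h (g x y)).
Proof. intros [Fh Hh] [Fg Hg]; exists (RComp Fh [Fg]); intros; eapply comp1; eauto. Qed.
Lemma R2_comp2 h g1 g2 : R2 h -> R2 g1 -> R2 g2 -> R2 (fun x y => h (g1 x y) (g2 x y)).
Proof. intros [Fh Hh] [F1 H1] [F2 H2]; exists (RComp Fh [F1;F2]); intros; eapply comp2; eauto. Qed.
Lemma R3_comp1 h g : R1 h -> R3 g -> R3 (fun x y z => h (g x y z)).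
Proof. intros [Fh Hh] [Fg Hg]; exists (RComp Fh [Fg]); intros; eapply comp1; eauto. Qed.
Lemma R3_comp2 h g1 g2 : R2 h -> R3 g1 -> R3 g2 -> R3 (fun x y z => h (g1 x y z) (g2 x y z)).
Proof. intros [Fh Hh] [F1 H1] [F2 H2]; exists (RComp Fh [F1;F2]); intros; eapply comp2; eauto. Qed.
Lemma R2_comp3 h g1 g2 g3 : R3 h -> R2 g1 -> R2 g2 -> R2 g3 -> R2 (fun x y => h (g1 x y) (g2 x y) (g3 x y)).
Proof. intros [Fh Hh] [F1 H1] [F2 H2] [F3 H3]; exists (RComp Fh [F1;F2;F3]); intros; eapply comp3; eauto. Qed.
Lemma R3_comp3 h g1 g2 g3 : R3 h -> R3 g1 -> R3 g2 -> R3 g3 -> R3 (fun x y z => h (g1 x y z) (g2 x y z) (g3 x y z)).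
Proof. intros [Fh Hh] [F1 H1] [F2 H2] [F3 H3]; exists (RComp Fh [F1;F2;F3]); intros; eapply comp3; eauto. Qed.

Lemma R1_prec (b : nat) s : R2 s -> R1 (fun n => nat_rect (fun _ => nat) b (fun k z => s k z) n).
Proof.
  intros [Fs Hs]; exists (RPrec (constF b) Fs); intro n; induction n; simpl.
  - constructor; apply constF_ok.
  - econstructor; eauto.
Qed.
Lemma R2_prec b s : R1 b -> R3 s -> R2 (fun n x => nat_rect (fun _ => nat) (b x) (fun k z => s k z x) n).
Proof.
  intros [Fb Hb] [Fs Hs]; exists (RPrec Fb Fs); intros n x; induction n; simpl.
  - constructor; auto.
  - econstructor; eauto.
Qed.

Lemma R1_mu f g : R2 f -> (forall x, f (g x) x = 0 /\ forall m, m < g x -> f m x <> 0) -> R1 g.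
Proof.
  intros [Ff Hf] H; exists (RMu Ff); intro x; destruct (H x) as [H1 H2]; constructor.
  - rewrite <- H1; auto.
  - intros m Hm; specialize (H2 m Hm); destruct (f m x) eqn:E; [congruence|]; exists n; rewrite <- E; auto.
Qed.

Lemma R2_add : R2 Nat.add.
Proof.
  eapply R2_ext. apply (R2_prec (fun x => x) (fun k z x => S z)).
  apply R1_id. apply R3_comp1. apply R1_succ. apply R3_p1.
  intros n x; induction n; simpl; auto.
Qed.
Lemma R2_mul : R2 Nat.mul.
Proof.
  eapply R2_ext. apply (R2_prec (fun x => 0) (fun k z x => z + x)).
  apply R1_const. apply R3_comp2. apply R2_add. apply R3_p1. apply R3_p2.
  intros n x; induction n; simpl; auto. rewrite IHn; lia.
Qed.
Lemma R1_pred : R1 pred.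
Proof.
  eapply R1_ext. apply (R1_prec 0 (fun k z => k)). apply R2_p0.
  intros n; destruct n; reflexivity.
Qed.
Lemma R2_sub : R2 Nat.sub.
Proof.
  assert (R2 (fun n x => x - n)).
  { eapply R2_ext. apply (R2_prec (fun x => x) (fun k z x => pred z)).
    apply R1_id. apply R3_comp1. apply R1_pred. apply R3_p1.
    intros n x; induction n; simpl. lia. rewrite IHn; lia. }
  eapply R2_ext. apply (R2_comp2 _ _ _ H R2_p1 R2_p0). simpl; auto.
Qed.
Definition sg (n : nat) := match n with 0 => 0 | _ => 1 end.
Lemma R1_sg : R1 sg.
Proof.
  eapply R1_ext. apply (R1_prec 0 (fun k z => 1)). apply R2_const.
  intros n; destruct n; reflexivity.
Qed.
Lemma R1_eqc N : R1 (fun x => if Nat.eqb x N then 1 else 0).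
Proof.
  eapply R1_ext.
  apply (R1_comp2 Nat.sub (fun _ => 1) (fun x => sg ((x - N) + (N - x)))).
  apply R2_sub. apply R1_const. apply R1_comp1. apply R1_sg.
  apply R1_comp2. apply R2_add. apply R1_comp2. apply R2_sub. apply R1_id. apply R1_const.
  apply R1_comp2. apply R2_sub. apply R1_const. apply R1_id.
  intros x; destruct (Nat.eqb_spec x N). subst; rewrite !Nat.sub_diag; reflexivity.
  destruct (x - N + (N - x)) eqn:E. lia. reflexivity.
Qed.

Lemma table1 K : forall r, (forall a, K <= a -> r a = 0) -> R1 r.
Proof.
  induction K; intros r Hr.
  - eapply R1_ext. apply (R1_const 0). intros; rewrite Hr; lia.
  - assert (R1 (fun a => if Nat.eqb a K then 0 else r a)) as H1.
    { apply IHK. intros a Ha. destruct (Nat.eqb_spec a K); auto. apply Hr; lia. }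
    eapply R1_ext.
    apply (R1_comp2 Nat.add _ (fun a => (if Nat.eqb a K then 1 else 0) * r K) R2_add H1).
    apply R1_comp2. apply R2_mul. apply R1_eqc. apply R1_const.
    intros a; simpl. destruct (Nat.eqb_spec a K); subst; lia.
Qed.

Lemma table2 N K : forall h, (forall i a, N <= i \/ K <= a -> h i a = 0) -> R2 h.
Proof.
  induction N; intros h Hh.
  - eapply R2_ext. apply (R2_const 0). intros; rewrite Hh; lia.
  - assert (R2 (fun i a => if Nat.eqb i N then 0 else h i a)) as H1.
    { apply IHN. intros i a Ha. destruct (Nat.eqb_spec i N); auto. apply Hh; lia. }
    assert (R1 (h N)) as H2.
    { apply (table1 K). intros; apply Hh; lia. }
    eapply R2_ext.
    apply (R2_comp2 Nat.add _ (fun i a => (if Nat.eqb i N then 1 else 0) * h N a) R2_add H1).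
    apply R2_comp2. apply R2_mul. apply (R2_comp1 (fun i => if Nat.eqb i N then 1 else 0) (fun i a => i)). apply R1_eqc. apply R2_p0.
    apply (R2_comp1 (h N) (fun i a => a)). apply H2. apply R2_p1.
    intros i a; simpl. destruct (Nat.eqb_spec i N); subst; lia.
Qed.

Fixpoint tri n := match n with 0 => 0 | S m => tri m + S m end.
Lemma tri2 n : 2 * tri n = n * (n + 1).
Proof. induction n; simpl tri; nia. Qed.
Lemma cpair_tri x y : cpair x y = tri (x + y) + y.
Proof. unfold cpair. rewrite <- tri2, Nat.mul_comm, Nat.div_mul; lia. Qed.
Lemma tri_mono m n : m <= n -> tri m <= tri n.
Proof. induction 1; simpl; lia. Qed.
Lemma cpair_inj x y x' y' : cpair x y = cpair x' y' -> x = x' /\ y = y'.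
Proof.
  rewrite !cpair_tri; intro E.
  assert (x + y = x' + y').
  { destruct (lt_eq_lt_dec (x+y) (x'+y')) as [[H|H]|H]; auto.
    - pose proof (tri_mono _ _ H); simpl in *; lia.
    - pose proof (tri_mono _ _ H); simpl in *; lia. }
  rewrite H in E; lia.
Qed.
Fixpoint unp z : nat * nat := match z with 0 => (0, 0)
  | S z => let (x, y) := unp z in match x with 0 => (S y, 0) | S x => (x, S y) end end.
Lemma unp_inv z : cpair (fst (unp z)) (snd (unp z)) = z.
Proof.
  induction z; [reflexivity|]. simpl. destruct (unp z) as [x y]. simpl in *.
  rewrite cpair_tri in *. destruct x; simpl; rewrite <- IHz.
  - rewrite !Nat.add_0_r; simpl; lia.
  - replace (x + S y) with (S x + y) by lia. lia.
Qed.
Lemma unp_cpair x y : unp (cpair x y) = (x, y).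
Proof.
  pose proof (unp_inv (cpair x y)). apply cpair_inj in H. destruct (unp (cpair x y)); simpl in *.
  destruct H; subst; auto.
Qed.
Definition sfun z := fst (unp z) + snd (unp z).
Definition sndu z := z - tri (sfun z).
Definition fstu z := sfun z - (z - tri (sfun z)).
Lemma fstu_ok z : fstu z = fst (unp z).
Proof. unfold fstu, sfun. pose proof (unp_inv z). rewrite cpair_tri in H. lia. Qed.
Lemma sndu_ok z : sndu z = snd (unp z).
Proof. unfold sndu, sfun. pose proof (unp_inv z). rewrite cpair_tri in H. lia. Qed.
Lemma fstu_cpair x y : fstu (cpair x y) = x.
Proof. rewrite fstu_ok, unp_cpair; auto. Qed.
Lemma sndu_cpair x y : sndu (cpair x y) = y.
Proof. rewrite sndu_ok, unp_cpair; auto. Qed.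

Lemma R1_tri : R1 tri.
Proof.
  eapply R1_ext. apply (R1_prec 0 (fun k z => z + S k)).
  apply R2_comp2. apply R2_add. apply R2_p1. apply (R2_comp1 S (fun k z => k)). apply R1_succ. apply R2_p0.
  intro n; induction n; simpl; auto.
Qed.
Lemma R1_sfun : R1 sfun.
Proof.
  apply (R1_mu (fun t z => S z - tri (S t))).
  - apply R2_comp2. apply R2_sub. apply (R2_comp1 S (fun t z => z)). apply R1_succ. apply R2_p1.
    apply (R2_comp1 (fun t => tri (S t)) (fun t z => t)). apply R1_comp1. apply R1_tri. apply R1_succ. apply R2_p0.
  - intro z. pose proof (unp_inv z). rewrite cpair_tri in H. unfold sfun. split.
    + simpl tri. lia.
    + intros m Hm. pose proof (tri_mono (S m) (fst (unp z) + snd (unp z)) Hm). lia.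
Qed.
Lemma R1_sndu : R1 sndu.
Proof. apply R1_comp2. apply R2_sub. apply R1_id. apply R1_comp1. apply R1_tri. apply R1_sfun. Qed.
Lemma R1_fstu : R1 fstu.
Proof. apply R1_comp2. apply R2_sub. apply R1_sfun. apply R1_sndu. Qed.

Lemma code_list_inj : forall l l', code_list l = code_list l' -> l = l'.
Proof.
  induction l; destruct l'; simpl; intros; try discriminate; auto.
  injection H; intro E; apply cpair_inj in E; destruct E; subst; f_equal; auto.
Qed.
Lemma code_list_surj : forall c, exists l, c = code_list l.
Proof.
  intro c; induction c as [c IH] using (well_founded_induction lt_wf).
  destruct c. exists []; auto.
  pose proof (unp_inv c). destruct (IH (snd (unp c))) as [l Hl].
  { rewrite cpair_tri in H; lia. }
  exists (fst (unp c) :: l). simpl. rewrite <- Hl, H. auto.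
Qed.
Lemma code_list_ge : forall l, length l <= code_list l.
Proof. induction l; simpl; auto. rewrite cpair_tri; lia. Qed.

Lemma dec_of_chi (P : nat -> Prop) chi : R1 chi -> (forall n, chi n <= 1 /\ (P n <-> chi n = 1)) ->
  decidable_nat P.
Proof.
  intros [F HF] H. exists F; split.
  - intro n; exists (chi n); split; auto. apply H.
  - intro n; split; intro Hn.
    + apply H in Hn. rewrite <- Hn; auto.
    + apply H. eapply reval_det; eauto.
Qed.
Lemma chi_of_dec (P : nat -> Prop) : decidable_nat P ->
  exists chi, R1 chi /\ (forall n, chi n <= 1 /\ (P n <-> chi n = 1)).
Proof.
  intros [F [H1 H2]].
  exists (fun n => proj1_sig (constructive_indefinite_description _ (H1 n))).
  split.
  - exists F; intro n; pose proof (proj2_sig (constructive_indefinite_description _ (H1 n))) as Hp;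
    apply Hp.
  - intro n; pose proof (proj2_sig (constructive_indefinite_description _ (H1 n))) as [Hb Hb1].
    split; auto. rewrite H2. split; intro HH. eapply reval_det; eauto. rewrite <- HH; auto.
Qed.
Lemma dec_or (P1 P2 : nat -> Prop) : decidable_nat P1 -> decidable_nat P2 ->
  decidable_nat (fun n => P1 n \/ P2 n).
Proof.
  intros D1 D2. destruct (chi_of_dec _ D1) as [c1 [R1c1 H1]].
  destruct (chi_of_dec _ D2) as [c2 [R1c2 H2]].
  apply (dec_of_chi _ (fun n => sg (c1 n + c2 n))).
  - apply R1_comp1. apply R1_sg. apply R1_comp2; auto. apply R2_add.
  - intro n. destruct (H1 n) as [a1 b1]. destruct (H2 n) as [a2 b2].
    rewrite b1, b2. destruct (c1 n) as [|[|]]; destruct (c2 n) as [|[|]]; simpl in *; split; try lia;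
    split; intros; try lia; tauto.
Qed.

Section RegDec.
Context {A : Type} (L : list A) {Q : Type} (q0 : Q) (delta : Q -> A -> Q) (acc : Q -> Prop)
  (lQ : list Q) (HlQ : forall q, In q lQ).

Definition Rl (a : A) (n : nat) := nth_error L n = Some a.

Lemma idx_ex : forall q, exists i, nth_error lQ i = Some q.
Proof. intro q. apply In_nth_error, HlQ. Qed.
Definition idx q := proj1_sig (constructive_indefinite_description _ (idx_ex q)).
Lemma idx_ok q : nth_error lQ (idx q) = Some q.
Proof. unfold idx; destruct (constructive_indefinite_description _ (idx_ex q)); auto. Qed.

Definition hh (s a : nat) : nat := match s with 0 => 0 | S i =>
  match nth_error lQ i, nth_error L a with Some q, Some l => S (idx (delta q l)) | _, _ => 0 end end.
Definition hA (s : nat) : nat := match s with 0 => 0 | S i =>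
  match nth_error lQ i with Some q => if excluded_middle_informative (acc q) then 1 else 0
  | None => 0 end end.
Lemma R2_hh : R2 hh.
Proof.
  apply (table2 (S (length lQ)) (length L)). intros i a [H|H]; destruct i; simpl; auto.
  - rewrite (proj2 (nth_error_None lQ i)); auto; lia.
  - destruct (nth_error lQ i); auto. rewrite (proj2 (nth_error_None L a)); auto.
Qed.
Lemma R1_hA : R1 hA.
Proof.
  apply (table1 (S (length lQ))). intros i H; destruct i; simpl; auto.
  rewrite (proj2 (nth_error_None lQ i)); auto; lia.
Qed.
Definition tl z := match z with 0 => 0 | S z => sndu z end.
Definition caseR r q := match r with 0 => q | S r => hh q (fstu r) end.
Definition Rk k c := nat_rect (fun _ => nat) c (fun _ r => tl r) k.
Definition Qk k c := nat_rect (fun _ => nat) (S (idx q0)) (fun k q => caseR (Rk k c) q) k.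
Definition chi c := hA (Qk c c).
Lemma R1_chi : R1 chi.
Proof.
  assert (R1 tl).
  { eapply R1_ext. apply (R1_prec 0 (fun k _ => sndu k)).
    apply (R2_comp1 sndu (fun k _ => k)). apply R1_sndu. apply R2_p0. intros [|]; auto. }
  assert (R2 caseR).
  { eapply R2_ext. apply (R2_prec (fun q => q) (fun k z q => hh q (fstu k))).
    apply R1_id. apply R3_comp2. apply R2_hh. apply R3_p2.
    apply (R3_comp1 fstu (fun k z q => k)). apply R1_fstu. apply R3_p0.
    intros [|]; auto. }
  assert (R2 Rk).
  { apply (R2_prec (fun c => c) (fun k z c => tl z)). apply R1_id. apply (R3_comp1 tl (fun k z c => z)); auto. apply R3_p1. }
  assert (R2 Qk).
  { apply (R2_prec (fun _ => S (idx q0)) (fun k z c => caseR (Rk k c) z)). apply R1_const.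
    apply R3_comp2; auto. apply (R3_comp2 Rk (fun k z c => k) (fun k z c => c)); auto. apply R3_p0. apply R3_p2. apply R3_p1. }
  unfold chi. apply R1_comp1. apply R1_hA. apply R1_comp2; auto; apply R1_id.
Qed.

Lemma Rk_code k ns : Rk k (code_list ns) = code_list (skipn k ns).
Proof.
  induction k; [reflexivity|]. change (Rk (S k) (code_list ns)) with (tl (Rk k (code_list ns))).
  rewrite IHk. replace (skipn (S k) ns) with (skipn 1 (skipn k ns)).
  - destruct (skipn k ns); simpl; auto. rewrite sndu_cpair; auto.
  - rewrite skipn_skipn. f_equal; lia.
Qed.
Lemma firstn_S_skipn : forall k (ns : list nat) n t, skipn k ns = n :: t -> firstn (S k) ns = firstn k ns ++ [n].
Proof.
  induction k; destruct ns; simpl; intros; try discriminate.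
  - injection H; intros; subst; auto.
  - simpl. f_equal. rewrite <- (IHk _ _ _ H). reflexivity.
Qed.
Lemma Qk_code k ns : Qk k (code_list ns) = fold_left hh (firstn k ns) (S (idx q0)).
Proof.
  induction k; [reflexivity|].
  change (Qk (S k) (code_list ns)) with (caseR (Rk k (code_list ns)) (Qk k (code_list ns))).
  rewrite IHk, Rk_code.
  destruct (skipn k ns) eqn:E; cbn [code_list caseR].
  - assert (length ns <= k). { pose proof (length_skipn k ns). rewrite E in H; simpl in H. lia. }
    rewrite !firstn_all2; auto; lia.
  - rewrite (firstn_S_skipn _ _ _ _ E), fold_left_app. simpl. rewrite fstu_cpair; auto.
Qed.
Lemma chi_code ns : chi (code_list ns) = hA (fold_left hh ns (S (idx q0))).
Proof. unfold chi. rewrite Qk_code, firstn_all2; auto. apply code_list_ge. Qed.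

Lemma run_valid : forall w ns, Forall2 Rl w ns -> forall q,
  fold_left hh ns (S (idx q)) = S (idx (fold_left delta w q)).
Proof.
  induction 1; intro q; simpl; auto. unfold Rl in H. rewrite idx_ok, H. apply IHForall2.
Qed.
Lemma run0 : forall ns, fold_left hh ns 0 = 0.
Proof. induction ns; simpl; auto. Qed.
Lemma run_invalid : forall ns, (~ exists w, Forall2 Rl w ns) -> forall q, fold_left hh ns (S (idx q)) = 0.
Proof.
  induction ns; intros H q.
  - exfalso; apply H; exists []; constructor.
  - simpl. rewrite idx_ok. destruct (nth_error L a) eqn:E.
    + apply IHns. intros [w Hw]. apply H. exists (a0 :: w). constructor; auto.
    + apply run0.
Qed.
Lemma Forall2_fun : forall w ns, Forall2 Rl w ns -> forall w', Forall2 Rl w' ns -> w = w'.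
Proof.
  induction 1; intros w' H'; inversion H' as [|a' n' w2 ns2 Ha Hr]; subst; auto. unfold Rl in *. rewrite H in Ha.
  injection Ha; intro; subst. f_equal; auto.
Qed.

Lemma regdec (F : list A -> Prop) : (forall w, F w <-> acc (fold_left delta w q0)) ->
  decidable_nat (fun c => exists w ns, Forall2 (fun a n => nth_error L n = Some a) w ns /\
       c = code_list ns /\ F w).
Proof.
  intro HF. apply (dec_of_chi _ chi R1_chi). intro c.
  destruct (code_list_surj c) as [ns ->]. rewrite chi_code.
  destruct (classic (exists w, Forall2 Rl w ns)) as [[w Hw]|Hn].
  - rewrite (run_valid _ _ Hw). simpl. rewrite idx_ok.
    destruct (excluded_middle_informative (acc (fold_left delta w q0))) as [Ha|Ha]; split; auto.
    + split; auto. intros _. exists w, ns; repeat split; auto. apply HF; auto.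
    + split; intro H; try discriminate. destruct H as [w' [ns' [H1 [H2 H3]]]].
      apply code_list_inj in H2; subst. pose proof (Forall2_fun _ _ Hw _ H1); subst.
      apply HF in H3; contradiction.
  - rewrite run_invalid; auto. simpl. split; auto. split; intro H; try discriminate.
    destruct H as [w' [ns' [H1 [H2 H3]]]]. apply code_list_inj in H2; subst. exfalso; apply Hn; eauto.
Qed.
End RegDec.
Open Scope Z_scope.

Lemma factor_S {A : Type} (x : Z -> A) i n : factor x i (S n) = x i :: factor x (i + 1) n.
Proof.
  unfold factor. simpl. rewrite <- seq_shift, map_map. f_equal.
  - f_equal; lia.
  - apply map_ext; intro k; f_equal; lia.
Qed.
Lemma factor_length {A : Type} (x : Z -> A) i n : length (factor x i n) = n.
Proof. unfold factor; rewrite length_map, length_seq; auto. Qed.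

Section Graph.
Context {V T : Type} (B : V -> V -> T -> Prop).

Fixpoint lpe (v : V) (w : list T) (v' : V) : Prop :=
  match w with [] => v = v' | a :: t => exists u, B v u a /\ lpe u t v' end.
Definition FG (w : list T) : Prop := forall v v', ~ lpe v w v'.
Definition deltaG (P : V -> Prop) (a : T) : V -> Prop := fun v' => exists v, P v /\ B v v' a.
Lemma fold_deltaG : forall w P v', fold_left deltaG w P v' <-> exists v, P v /\ lpe v w v'.
Proof.
  induction w; intros P v'; simpl.
  - split; [intro; exists v'; auto | intros [v [H1 H2]]; subst; auto].
  - rewrite IHw. unfold deltaG. split.
    + intros [u [[v [H1 H2]] H3]]. exists v; split; eauto.
    + intros [v [H1 [u [H2 H3]]]]. exists u; split; eauto.
Qed.

Fixpoint sublists (l : list V) : list (list V) :=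
  match l with [] => [[]] | a :: t => sublists t ++ map (cons a) (sublists t) end.
Lemma sublists_ex (P : V -> Prop) : forall l, exists s, In s (sublists l) /\
  forall v, In v s <-> (In v l /\ P v).
Proof.
  induction l as [|a t [s [Hs1 Hs2]]].
  - exists []; simpl; split; auto. intuition.
  - destruct (classic (P a)).
    + exists (a :: s); split. simpl; apply in_or_app; right; apply in_map; auto.
      intro v; simpl; rewrite Hs2; split; intuition; subst; auto.
    + exists s; split. simpl; apply in_or_app; left; auto.
      intro v; simpl; rewrite Hs2; split; intuition; subst; tauto.
Qed.
Lemma finite_pred : Finite V -> Finite (V -> Prop).
Proof.
  intros [lV HV]. exists (map (fun s v => In v s) (sublists lV)). intro P.
  destruct (sublists_ex P lV) as [s [H1 H2]]. apply in_map_iff. exists s; split; auto.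
  apply functional_extensionality; intro v; apply propositional_extensionality.
  rewrite H2; intuition.
Qed.

Lemma FG_regular : Finite V -> regular FG.
Proof.
  intro HV. exists (V -> Prop), (fun _ => True), deltaG, (fun P => forall v, ~ P v).
  split. apply finite_pred; auto.
  intro w; unfold FG; split.
  - intros H v' Hv'. apply fold_deltaG in Hv'. destruct Hv' as [v [_ Hv]]. eapply H; eauto.
  - intros H v v' Hv. apply (H v'). apply fold_deltaG. eauto.
Qed.

Variable x : Z -> T.
Lemma lpe_path : forall n i v v', lpe v (factor x i n) v' ->
  exists z : Z -> V, z i = v /\ forall j, (i <= j < i + Z.of_nat n)%Z -> B (z j) (z (j + 1)%Z) (x j).
Proof.
  induction n; intros i v v' H.
  - exists (fun _ => v); split; auto; intros; lia.
  - rewrite factor_S in H. destruct H as [u [H1 H2]].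
    destruct (IHn _ _ _ H2) as [z [Hz1 Hz2]].
    exists (fun j => if Z.eqb j i then v else z j). split.
    + rewrite Z.eqb_refl; auto.
    + intros j Hj. destruct (Z.eqb_spec j i).
      * subst. destruct (Z.eqb_spec (i + 1) i); [lia|]. auto.
      * destruct (Z.eqb_spec (j + 1) i); [lia|]. apply Hz2; lia.
Qed.

Definition Pth (i : Z) (v : V) (n : nat) : Prop :=
  exists z : Z -> V, z i = v /\ forall j, (i - Z.of_nat n <= j < i + Z.of_nat n)%Z -> B (z j) (z (j + 1)%Z) (x j).
Lemma Pth_down i v n m : (n <= m)%nat -> Pth i v m -> Pth i v n.
Proof. intros Hnm [z [H1 H2]]; exists z; split; auto; intros j Hj; apply H2; lia. Qed.

Variable lV : list V.
Hypothesis HV : forall v, In v lV.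

Lemma pigeon (Pr : V -> nat -> Prop) : (forall v n m, (n <= m)%nat -> Pr v m -> Pr v n) ->
  (forall N, exists v, Pr v N) -> exists v, forall n, Pr v n.
Proof.
  intros Hd Hex. apply NNPP; intro Hn.
  assert (forall v, exists n, ~ Pr v n).
  { intro v. apply not_all_ex_not. intro Hc; apply Hn; eauto. }
  assert (forall l, exists N, forall v, In v l -> ~ Pr v N).
  { induction l as [|a t [Nt HNt]]. exists 0%nat; simpl; tauto.
    destruct (H a) as [na Hna]. exists (Nat.max na Nt). intros v [Hv|Hv] Hp.
    - subst. apply Hna. eapply Hd; [|eauto]; lia.
    - apply (HNt v Hv). eapply Hd; [|eauto]; lia. }
  destruct (H0 lV) as [N HN]. destruct (Hex N) as [v Hv]. apply (HN v); auto.
Qed.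

Hypothesis Hloc : forall i n, exists v v', lpe v (factor x i n) v'.
Definition Good i v := forall n, Pth i v n.

Lemma good0 : exists v, Good 0 v.
Proof.
  apply pigeon. intros; eapply Pth_down; eauto.
  intro N. destruct (Hloc (- Z.of_nat N) (N + N)) as [v [v' H]].
  destruct (lpe_path _ _ _ _ H) as [z [_ Hz]]. exists (z 0%Z), z; split; auto.
  intros j Hj; apply Hz; lia.
Qed.
Lemma good_fwd i v : Good i v -> exists v', B v v' (x i) /\ Good (i + 1) v'.
Proof.
  intro Hg. assert (exists v', forall n, B v v' (x i) /\ Pth (i + 1) v' n) as [v' Hv'].
  { apply (pigeon (fun v' n => B v v' (x i) /\ Pth (i + 1) v' n)).
  - intros v' n m Hnm [H1 H2]; split; auto; eapply Pth_down; eauto.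
  - intro N. destruct (Hg (S N)) as [z [Hz1 Hz2]]. exists (z (i + 1)%Z). split.
    + rewrite <- Hz1. apply Hz2; lia.
    + exists z; split; auto. intros j Hj; apply Hz2; lia. }
  exists v'; split; [apply (Hv' 0%nat)|intro n; apply Hv'].
Qed.
Lemma good_bwd i v : Good i v -> exists u, B u v (x (i - 1)) /\ Good (i - 1) u.
Proof.
  intro Hg. assert (exists u, forall n, B u v (x (i - 1)) /\ Pth (i - 1) u n) as [u Hu].
  { apply (pigeon (fun u n => B u v (x (i - 1)) /\ Pth (i - 1) u n)).
  - intros u n m Hnm [H1 H2]; split; auto; eapply Pth_down; eauto.
  - intro N. destruct (Hg (S N)) as [z [Hz1 Hz2]]. exists (z (i - 1)%Z). split.
    + rewrite <- Hz1. replace i with (i - 1 + 1)%Z at 2 by lia. apply Hz2; lia.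
    + exists z; split; auto. intros j Hj; apply Hz2; lia. }
  exists u; split; [apply (Hu 0%nat)|intro n; apply Hu].
Qed.

Lemma compact : exists zeta : Z -> V, forall i, B (zeta i) (zeta (i + 1)%Z) (x i).
Proof.
  destruct good0 as [v0 Hv0].
  assert (Hf : forall i v, exists v', Good i v -> B v v' (x i) /\ Good (i + 1) v').
  { intros i v. destruct (classic (Good i v)) as [Hg|Hg].
    - destruct (good_fwd i v Hg) as [v' Hv']; eauto.
    - exists v; tauto. }
  assert (Hb : forall i v, exists u, Good i v -> B u v (x (i - 1)) /\ Good (i - 1) u).
  { intros i v. destruct (classic (Good i v)) as [Hg|Hg].
    - destruct (good_bwd i v Hg) as [u Hu]; eauto.
    - exists v; tauto. }
  set (f := fun i v => proj1_sig (constructive_indefinite_description _ (Hf i v))).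
  set (g := fun i v => proj1_sig (constructive_indefinite_description _ (Hb i v))).
  assert (Hfs : forall i v, Good i v -> B v (f i v) (x i) /\ Good (i + 1) (f i v)).
  { intros i v; unfold f; destruct (constructive_indefinite_description _ (Hf i v)); auto. }
  assert (Hgs : forall i v, Good i v -> B (g i v) v (x (i - 1)) /\ Good (i - 1) (g i v)).
  { intros i v; unfold g; destruct (constructive_indefinite_description _ (Hb i v)); auto. }
  set (fw := fix fw (k : nat) : V := match k with O => v0 | S k => f (Z.of_nat k) (fw k) end).
  set (bw := fix bw (k : nat) : V := match k with O => v0 | S k => g (- Z.of_nat k)%Z (bw k) end).
  assert (Hfw : forall k, Good (Z.of_nat k) (fw k)).
  { induction k; simpl; auto. replace (Z.pos (Pos.of_succ_nat k)) with (Z.of_nat k + 1)%Z by lia.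
    apply Hfs; auto. }
  assert (Hbw : forall k, Good (- Z.of_nat k) (bw k)).
  { induction k; simpl; auto. replace (Z.neg (Pos.of_succ_nat k)) with (- Z.of_nat k - 1)%Z by lia.
    apply Hgs; auto. }
  exists (fun i => if Z.leb 0 i then fw (Z.to_nat i) else bw (Z.to_nat (- i))).
  intro i. destruct (Z.leb_spec 0 i).
  - destruct (Z.leb_spec 0 (i + 1)); [|lia].
    replace (Z.to_nat (i + 1)) with (S (Z.to_nat i)) by lia. simpl.
    pose proof (Hfs _ _ (Hfw (Z.to_nat i))) as [H1 _]. rewrite Z2Nat.id in H1 |- * by lia. auto.
  - destruct (Z.eq_dec i (-1)) as [->|Hne].
    + simpl. pose proof (Hgs 0%Z v0 Hv0) as [H1 _]. simpl in H1. exact H1.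
    + destruct (Z.leb_spec 0 (i + 1)); [lia|].
      replace (Z.to_nat (- i)) with (S (Z.to_nat (- (i + 1)))) by lia.
      set (k := Z.to_nat (- (i + 1))). simpl.
      pose proof (Hgs _ _ (Hbw k)) as [H1 _].
      replace (- Z.of_nat k - 1)%Z with i in H1 by (unfold k; lia). exact H1.
Qed.
End Graph.

Section Grp.
Context (G : Type) (mul : G -> G -> G) (one : G) (inv : G -> G)
  (HG : group_axioms G mul one inv) (S : list G).

Variable x : Z -> Ltr inv S.
Fixpoint fwo (k : nat) : G := match k with O => one | Datatypes.S k => mul (fwo k) (proj1_sig (x (Z.of_nat k))) end.
Fixpoint bwo (k : nat) : G := match k with O => one | Datatypes.S k => mul (bwo k) (inv (proj1_sig (x (- Z.of_nat (Datatypes.S k))%Z))) end.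
Definition omega (i : Z) : G := if Z.leb 0 i then fwo (Z.to_nat i) else bwo (Z.to_nat (- i)).

Lemma omega_step i : omega (i + 1) = mul (omega i) (proj1_sig (x i)).
Proof.
  destruct HG as [Ha Hl Hr Hil Hir].
  unfold omega. destruct (Z.leb_spec 0 i).
  - destruct (Z.leb_spec 0 (i + 1)); [|lia].
    replace (Z.to_nat (i + 1)) with (Datatypes.S (Z.to_nat i)) by lia. simpl.
    rewrite Z2Nat.id by lia. auto.
  - replace (Z.to_nat (- i)) with (Datatypes.S (Z.to_nat (- (i + 1)))) by lia. simpl.
    replace (Z.neg (Pos.of_succ_nat (Z.to_nat (- (i + 1)))))%Z with i by lia.
    rewrite <- Ha, Hil, Hr.
    destruct (Z.leb_spec 0 (i + 1)).
    + replace (Z.to_nat (i + 1)) with O by lia. replace (Z.to_nat (- (i + 1))) with O by lia. auto.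
    + auto.
Qed.

Lemma omega_factor : forall n i, omega (i + Z.of_nat n) = mul (omega i) (word_eval mul one inv S (factor x i n)).
Proof.
  destruct HG as [Ha Hl Hr Hil Hir].
  induction n; intro i.
  - simpl. rewrite Z.add_0_r, Hr; auto.
  - rewrite factor_S. simpl word_eval. replace (i + Z.of_nat (Datatypes.S n))%Z with (i + 1 + Z.of_nat n)%Z by lia.
    rewrite IHn, omega_step, Ha; auto.
Qed.

Lemma part1_fwd : skeleton mul one inv S x ->
  (forall i j, omega i = omega j -> i = j) /\
  forall i, proj1_sig (x i) = mul (inv (omega i)) (omega (i + 1)).
Proof.
  intro Hsk. pose proof HG as [Ha Hl Hr Hil Hir]. split.
  - assert (forall i j, (i < j)%Z -> omega i <> omega j).
    { intros i j Hij E. pose proof (omega_factor (Z.to_nat (j - i)) i) as Hf.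
      replace (i + Z.of_nat (Z.to_nat (j - i)))%Z with j in Hf by lia.
      rewrite <- E in Hf.
      assert (word_eval mul one inv S (factor x i (Z.to_nat (j - i))) = one).
      { transitivity (mul (mul (inv (omega i)) (omega i)) (word_eval mul one inv S (factor x i (Z.to_nat (j - i))))).
        rewrite Hil, Hl; auto. rewrite <- Ha, <- Hf, Hil; auto. }
      apply (Hsk i (Z.to_nat (j - i))); auto; lia. }
    intros i j E. destruct (Z.lt_trichotomy i j) as [h|[h|h]]; auto.
    + exfalso; eapply H; eauto.
    + exfalso; eapply H; eauto.
  - intro i. rewrite omega_step, Ha, Hil, Hl; auto.
Qed.
End Grp.

Lemma lpe_of_path {V T : Type} (B : V -> V -> T -> Prop) (x : Z -> T) (zeta : Z -> V) :
  (forall i, B (zeta i) (zeta (i + 1)%Z) (x i)) ->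
  forall n i, lpe B (zeta i) (factor x i n) (zeta (i + Z.of_nat n)%Z).
Proof.
  intros H; induction n; intro i.
  - simpl. rewrite Z.add_0_r; auto.
  - rewrite factor_S.
    replace (i + Z.of_nat (Datatypes.S n))%Z with (i + 1 + Z.of_nat n)%Z by lia.
    simpl. exists (zeta (i + 1)%Z). split; auto.
Qed.

Lemma XGamma_XF {V T : Type} (B : V -> V -> T -> Prop) (lV : list V) (HV : forall v, In v lV)
  (x : Z -> T) : (exists zeta : Z -> V, forall i, B (zeta i) (zeta (i + 1)%Z) (x i)) <-> XF (FG B) x.
Proof.
  split.
  - intros [zeta Hz] w Hw [i Hi]. rewrite <- Hi in Hw. eapply Hw, lpe_of_path; eauto.
  - intro H. apply (compact B x lV HV). intros i n. apply NNPP; intro Hn.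
    apply (H (factor x i n)).
    + intros v v' Hl. apply Hn; eauto.
    + exists i. rewrite factor_length; auto.
Qed.

Lemma regular_or {A : Type} (F1 F2 : list A -> Prop) : regular F1 -> regular F2 ->
  regular (fun w => F1 w \/ F2 w).
Proof.
  intros [Q1 [q1 [d1 [a1 [[l1 H1] E1]]]]] [Q2 [q2 [d2 [a2 [[l2 H2] E2]]]]].
  exists (Q1 * Q2)%type, (q1, q2), (fun p a => (d1 (fst p) a, d2 (snd p) a)),
    (fun p => a1 (fst p) \/ a2 (snd p)).
  split.
  - exists (list_prod l1 l2). intros [u v]; apply in_prod; auto.
  - intro w. assert (forall p, fold_left (fun p a => (d1 (fst p) a, d2 (snd p) a)) w p =
       (fold_left d1 w (fst p), fold_left d2 w (snd p))).
    { induction w; intros [u v]; simpl; auto. }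
    rewrite H, E1, E2; simpl; tauto.
Qed.

Lemma dec_ext (P P' : nat -> Prop) : decidable_nat P -> (forall n, P n <-> P' n) -> decidable_nat P'.
Proof. intros [f [H1 H2]] E; exists f; split; auto; intro n; rewrite <- E; auto. Qed.

Theorem proposition3
  (G : Type) (mul : G -> G -> G) (one : G) (inv : G -> G)
  (HG : group_axioms G mul one inv)
  (S : list G) (HS : generates mul one inv S)
  (V : Type) (B : V -> V -> Ltr inv S -> Prop)
  (HB : tileset_graph inv S B)
  (Y : (Z -> Ltr inv S) -> Prop)
  (HY : skeletal mul one inv S Y) (HYne : exists y, Y y) :
  let X := fun x => Y x /\ XGamma inv S B x in
  ((exists x, X x) <->
     exists (omega : Z -> G) (zeta : Z -> V) (d : Z -> Ltr inv S),
       snake mul inv S B omega zeta d /\ Y d) /\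
  (effective_subshift Y -> effective_subshift X) /\
  (sofic_subshift Y -> sofic_subshift X).
Proof.
  intro X. destruct HB as [[lV HV] _]. destruct HY as [HYsk HYsh].
  assert (HX : forall F, (forall x, Y x <-> XF F x) ->
     forall x, X x <-> XF (fun w => F w \/ FG B w) x).
  { intros F HF x. unfold X, XGamma. rewrite HF, (XGamma_XF B lV HV). unfold XF. split.
    - intros [H1 H2] w [Hw|Hw]; eauto.
    - intro H; split; intros w Hw; apply H; auto. }
  split; [|split].
  - split.
    + intros [x [Hx [zeta Hz]]]. exists (omega G mul one inv S x), zeta, x.
      destruct (part1_fwd G mul one inv HG S x (HYsk x Hx)) as [H1 H2].
      split; auto. split; auto.
    + intros [om [zeta [d [[_ Hs] Hd]]]]. exists d. split; auto. exists zeta. intro i; apply Hs.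
  - intros [F [[L [HL1 [HL2 Hdec]]] HF]]. exists (fun w => F w \/ FG B w). split.
    + exists L; repeat split; auto.
      destruct (FG_regular B (ex_intro _ lV HV)) as [Q [q0 [delta [acc [[lQ HlQ] HQ]]]]].
      pose proof (regdec L q0 delta acc lQ HlQ (FG B) HQ) as Hd2.
      eapply dec_ext. apply (dec_or _ _ Hdec Hd2).
      intro n; split.
      * intros [[w [ns [H1 [H2 H3]]]]|[w [ns [H1 [H2 H3]]]]]; exists w, ns; auto.
      * intros [w [ns [H1 [H2 [H3|H3]]]]]; [left|right]; exists w, ns; auto.
    + apply HX; auto.
  - intros [F [HFr HF]]. exists (fun w => F w \/ FG B w). split.
    + apply regular_or; auto. apply FG_regular. exists lV; auto.
    + apply HX; auto.
Qed.
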